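(* Let $L=(L;\wedge,\vee,{}^\ast,{}^\prime,0,1)$ be a pseudocomplemented de Morgan algebra and let $(P;\tau,\leq,\zeta)$ be its dual $pm$-space. Then $L$ is regular if and only if the poset $(P;\leq)$ has height at most $1$, i.e. every chain in $(P;\leq)$ has at most $2$ elements.
   Context: A pseudocomplemented de Morgan algebra ($pm$-algebra) is an algebra $(L;\wedge,\vee,{}^\ast,{}^\prime,0,1)$ such that $(L;\wedge,\vee,0,1)$ is a bounded distributive lattice, ${}^\ast$ is the pseudocomplement ($x\wedge y=0$ iff $y\le x^\ast$), and ${}^\prime$ is a de Morgan involution ($(x\vee y)'=x'\wedge y'$, $(x\wedge y)'=x'\vee y'$, $0'=1$, $1'=0$, $x''=x$). An algebra is regular if any two congruences on it having a common class are equal. A $pm$-space is $(P;\tau,\le,\zeta)$ where $(P;\tau,\le)$ is a Priestley space, $[X)$ is clopen for every clopen decreasing $X\subseteq P$, and $\zeta$ is a continuous order-reversing involution of $P$. The dual $pm$-space of $L$ is the set of prime ideals of $L$ ordered by inclusion, with the Priestley topology and $\zeta(I)=\{a\in L: a'\notin I\}$; $L$ is isomorphic to the algebra of clopen decreasing subsets of its dual space with $\cap,\cup,\emptyset,P$, $X^\ast=P\setminus[X)$ and $X'=P\setminus\zeta(X)$. *)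

(* Defs.v *)
Record pmAlgebra := PmAlgebra {
  carrier :> Type;
  meet : carrier -> carrier -> carrier;
  join : carrier -> carrier -> carrier;
  pc   : carrier -> carrier;
  inv  : carrier -> carrier;
  bot  : carrier;
  top  : carrier;
  meetC : forall x y, meet x y = meet y x;
  joinC : forall x y, join x y = join y x;
  meetA : forall x y z, meet x (meet y z) = meet (meet x y) z;
  joinA : forall x y z, join x (join y z) = join (join x y) z;
  meet_absorb : forall x y, meet x (join x y) = x;
  join_absorb : forall x y, join x (meet x y) = x;
  meet_joinDr : forall x y z, meet x (join y z) = join (meet x y) (meet x z);
  join_bot : forall x, join x bot = x;
  meet_top : forall x, meet x top = x;
  (* pseudocomplement: x /\ y = 0  iff  y <= x^*  (y <= z means meet y z = y) *)
  pcP : forall x y, meet x y = bot <-> meet y (pc x) = y;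
  inv_join : forall x y, inv (join x y) = meet (inv x) (inv y);
  inv_meet : forall x y, inv (meet x y) = join (inv x) (inv y);
  inv_bot : inv bot = top;
  inv_top : inv top = bot;
  invK : forall x, inv (inv x) = x
}.

Arguments meet {p}. Arguments join {p}. Arguments pc {p}. Arguments inv {p}.
Arguments bot {p}. Arguments top {p}.

Section Defs.
Variable L : pmAlgebra.

Definition le (x y : L) : Prop := meet x y = x.

Definition congruence (th : L -> L -> Prop) : Prop :=
  (forall x, th x x) /\
  (forall x y, th x y -> th y x) /\
  (forall x y z, th x y -> th y z -> th x z) /\
  (forall x1 y1 x2 y2, th x1 y1 -> th x2 y2 -> th (meet x1 x2) (meet y1 y2)) /\
  (forall x1 y1 x2 y2, th x1 y1 -> th x2 y2 -> th (join x1 x2) (join y1 y2)) /\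
  (forall x y, th x y -> th (pc x) (pc y)) /\
  (forall x y, th x y -> th (inv x) (inv y)).

Definition regular : Prop :=
  forall th ph : L -> L -> Prop, congruence th -> congruence ph ->
    (exists a, forall x, th a x <-> ph a x) ->
    forall x y, th x y <-> ph x y.

(** Prime ideals of L (points of the dual pm-space). *)
Definition prime_ideal (I : L -> Prop) : Prop :=
  I bot /\
  (forall x y, I y -> le x y -> I x) /\
  (forall x y, I x -> I y -> I (join x y)) /\
  ~ I top /\
  (forall x y, I (meet x y) -> I x \/ I y).

(** Order of the dual space: inclusion; equality of points is equality of sets. *)
Definition incl (I J : L -> Prop) : Prop := forall x, I x -> J x.
Definition same (I J : L -> Prop) : Prop := forall x, I x <-> J x.

Definition pchain (C : (L -> Prop) -> Prop) : Prop :=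
  (forall I, C I -> prime_ideal I) /\
  (forall I J, C I -> C J -> incl I J \/ incl J I).

Definition height_at_most_1 : Prop :=
  forall C, pchain C ->
    forall I J K, C I -> C J -> C K -> same I J \/ same J K \/ same I K.

End Defs.

(* Main.v *)
From Stdlib Require Import FunctionalExtensionality PropExtensionality Classical.
From mathcomp Require classical_sets.
Require Import Defs.
Arguments meetC {p}. Arguments joinC {p}. Arguments meetA {p}. Arguments joinA {p}.
Arguments meet_absorb {p}. Arguments join_absorb {p}. Arguments meet_joinDr {p}.
Arguments join_bot {p}. Arguments meet_top {p}. Arguments pcP {p}.
Arguments inv_join {p}. Arguments inv_meet {p}. Arguments inv_bot {p}. Arguments inv_top {p}.
Arguments invK {p}.

Lemma meetxx {L : pmAlgebra} (x : L) : meet x x = x.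
Proof. rewrite <- (join_absorb x x) at 2. apply meet_absorb. Qed.
Lemma joinxx {L : pmAlgebra} (x : L) : join x x = x.
Proof. rewrite <- (meet_absorb x x) at 2. apply join_absorb. Qed.
Lemma bot_join {L : pmAlgebra} (x : L) : join bot x = x.
Proof. rewrite joinC; apply join_bot. Qed.
Lemma top_meet {L : pmAlgebra} (x : L) : meet top x = x.
Proof. rewrite meetC; apply meet_top. Qed.
Lemma bot_meet {L : pmAlgebra} (x : L) : meet bot x = bot.
Proof. rewrite <- (bot_join x) at 1. apply meet_absorb. Qed.
Lemma meet_bot {L : pmAlgebra} (x : L) : meet x bot = bot.
Proof. rewrite meetC; apply bot_meet. Qed.
Lemma top_join {L : pmAlgebra} (x : L) : join top x = top.
Proof. rewrite <- (top_meet x) at 1. apply join_absorb. Qed.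
Lemma join_top {L : pmAlgebra} (x : L) : join x top = top.
Proof. rewrite joinC; apply top_join. Qed.
Lemma join_meetDr {L : pmAlgebra} (x y z : L) :
  join x (meet y z) = meet (join x y) (join x z).
Proof.
  transitivity (inv (inv (join x (meet y z)))); [symmetry; apply invK|].
  rewrite inv_join, (inv_meet y z), meet_joinDr, inv_join, !inv_meet, !invK. reflexivity.
Qed.
Lemma meet_joinDl {L : pmAlgebra} (x y z : L) :
  meet (join y z) x = join (meet y x) (meet z x).
Proof. rewrite meetC, meet_joinDr, (meetC x y), (meetC x z). reflexivity. Qed.

Lemma le_join {L : pmAlgebra} (x y : L) : le L x y <-> join x y = y.
Proof.
  unfold le; split; intro H.
  - rewrite <- H, joinC, meetC. apply join_absorb.
  - rewrite <- H. apply meet_absorb.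
Qed.
Lemma le_refl {L : pmAlgebra} (x : L) : le L x x.
Proof. apply meetxx. Qed.
Lemma le_trans {L : pmAlgebra} (x y z : L) : le L x y -> le L y z -> le L x z.
Proof. unfold le; intros H1 H2. rewrite <- H1, <- meetA, H2. reflexivity. Qed.
Lemma le_antisym {L : pmAlgebra} (x y : L) : le L x y -> le L y x -> x = y.
Proof. unfold le; intros H1 H2. rewrite <- H1, meetC. exact H2. Qed.
Lemma le_meet_l {L : pmAlgebra} (x y : L) : le L (meet x y) x.
Proof. unfold le. rewrite (meetC x y), <- meetA, meetxx. reflexivity. Qed.
Lemma le_meet_r {L : pmAlgebra} (x y : L) : le L (meet x y) y.
Proof. unfold le. rewrite <- meetA, meetxx. reflexivity. Qed.
Lemma le_join_l {L : pmAlgebra} (x y : L) : le L x (join x y).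
Proof. apply meet_absorb. Qed.
Lemma le_join_r {L : pmAlgebra} (x y : L) : le L y (join x y).
Proof. rewrite joinC. apply meet_absorb. Qed.
Lemma meet_glb {L : pmAlgebra} (x y z : L) : le L z x -> le L z y -> le L z (meet x y).
Proof. unfold le; intros H1 H2. rewrite meetA, H1, H2. reflexivity. Qed.
Lemma join_lub {L : pmAlgebra} (x y z : L) : le L x z -> le L y z -> le L (join x y) z.
Proof. rewrite !le_join; intros H1 H2. rewrite <- joinA, H2, H1. reflexivity. Qed.
Lemma meet_mono {L : pmAlgebra} (x y x' y' : L) : le L x x' -> le L y y' -> le L (meet x y) (meet x' y').
Proof. intros; apply meet_glb; [eapply le_trans; [apply le_meet_l|] | eapply le_trans; [apply le_meet_r|]]; assumption. Qed.
Lemma join_mono {L : pmAlgebra} (x y x' y' : L) : le L x x' -> le L y y' -> le L (join x y) (join x' y').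
Proof. intros; apply join_lub; [eapply le_trans; [|apply le_join_l] | eapply le_trans; [|apply le_join_r]]; assumption. Qed.
Lemma le_bot {L : pmAlgebra} (x : L) : le L bot x.
Proof. apply bot_meet. Qed.
Lemma le_top {L : pmAlgebra} (x : L) : le L x top.
Proof. apply meet_top. Qed.
Lemma le_bot_eq {L : pmAlgebra} (x : L) : le L x bot -> x = bot.
Proof. unfold le; intro H; rewrite <- H, meet_bot; reflexivity. Qed.
Lemma le_top_eq {L : pmAlgebra} (x : L) : le L top x -> x = top.
Proof. unfold le; intro H; rewrite <- H, top_meet; reflexivity. Qed.

Lemma pc_meet {L : pmAlgebra} (x : L) : meet x (pc x) = bot.
Proof. apply (proj2 (pcP x (pc x))). apply meetxx. Qed.
Lemma pc_le {L : pmAlgebra} (x y : L) : meet x y = bot -> le L y (pc x).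
Proof. apply pcP. Qed.
Lemma le_pc {L : pmAlgebra} (x y : L) : le L y (pc x) -> meet x y = bot.
Proof. apply pcP. Qed.
Lemma pc_anti {L : pmAlgebra} (x y : L) : le L x y -> le L (pc y) (pc x).
Proof.
  intro H. apply pc_le. apply le_bot_eq.
  rewrite <- (pc_meet y). apply meet_mono; auto using le_refl.
Qed.
Lemma pc_pc {L : pmAlgebra} (x : L) : le L x (pc (pc x)).
Proof. apply pc_le. rewrite meetC. apply pc_meet. Qed.
Lemma pc3 {L : pmAlgebra} (x : L) : pc (pc (pc x)) = pc x.
Proof. apply le_antisym. apply pc_anti, pc_pc. apply pc_pc. Qed.
Lemma pc_bot {L : pmAlgebra} : pc (@bot L) = top.
Proof. apply le_top_eq, pc_le, bot_meet. Qed.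
Lemma pc_top {L : pmAlgebra} : pc (@top L) = bot.
Proof. rewrite <- (top_meet (pc top)). apply pc_meet. Qed.
Lemma pc_join {L : pmAlgebra} (x y : L) : pc (join x y) = meet (pc x) (pc y).
Proof.
  apply le_antisym.
  - apply meet_glb; apply pc_anti; auto using le_join_l, le_join_r.
  - apply pc_le. rewrite meet_joinDl.
    rewrite (meetC (pc x) (pc y)) at 2.
    rewrite meetA, pc_meet, bot_meet, meetA, pc_meet, bot_meet, joinxx. reflexivity.
Qed.
Lemma pc_meet_pp {L : pmAlgebra} (x z : L) : pc (meet x z) = pc (meet (pc (pc x)) z).
Proof.
  apply le_antisym.
  - apply pc_le.
    set (w := meet (pc (meet x z)) z).
    assert (Hw : le L w (pc x)).
    { apply pc_le. unfold w. rewrite (meetC (pc (meet x z)) z), meetA. apply pc_meet. }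
    apply le_bot_eq. rewrite <- (pc_meet (pc x)).
    apply meet_glb.
    + eapply le_trans; [|apply Hw]. unfold w.
      apply meet_glb. apply le_meet_r. eapply le_trans; [apply le_meet_l|]; apply le_meet_r.
    + eapply le_trans; [apply le_meet_l|]. apply le_meet_l.
  - apply pc_anti. apply meet_mono; auto using pc_pc, le_refl.
Qed.
Lemma pc_meet_cong {L : pmAlgebra} (a1 a2 b1 b2 : L) :
  pc a1 = pc b1 -> pc a2 = pc b2 -> pc (meet a1 a2) = pc (meet b1 b2).
Proof.
  intros H1 H2.
  rewrite pc_meet_pp, meetC, pc_meet_pp, H1, H2, <- pc_meet_pp, meetC, <- pc_meet_pp.
  reflexivity.
Qed.

Lemma inv_anti {L : pmAlgebra} (x y : L) : le L x y -> le L (inv y) (inv x).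
Proof. unfold le; intro H. apply le_join. rewrite joinC, <- inv_meet, H. reflexivity. Qed.

Definition plus {L : pmAlgebra} (x : L) : L := inv (pc (inv x)).
Lemma join_plus {L : pmAlgebra} (x : L) : join x (plus x) = top.
Proof.
  unfold plus. rewrite <- (invK x) at 1. rewrite <- inv_meet, pc_meet. apply inv_bot.
Qed.
Lemma plus_le {L : pmAlgebra} (a z : L) : join a z = top -> le L (plus a) z.
Proof.
  intro H. unfold plus. rewrite <- (invK z). apply inv_anti. apply pc_le.
  rewrite <- inv_join, H. apply inv_top.
Qed.


Definition RR (L : pmAlgebra) : Prop :=
  forall a b : L, le L (meet a (plus a)) (join b (pc b)).



Lemma cg_refl {L : pmAlgebra} (th : L -> L -> Prop) : congruence L th -> forall x, th x x.
Proof. intros H; apply H. Qed.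
Lemma cg_sym {L : pmAlgebra} (th : L -> L -> Prop) : congruence L th -> forall x y, th x y -> th y x.
Proof. intros H; apply H. Qed.
Lemma cg_trans {L : pmAlgebra} (th : L -> L -> Prop) : congruence L th -> forall x y z, th x y -> th y z -> th x z.
Proof. intros H; apply H. Qed.
Lemma cg_meet {L : pmAlgebra} (th : L -> L -> Prop) : congruence L th ->
  forall x1 y1 x2 y2, th x1 y1 -> th x2 y2 -> th (meet x1 x2) (meet y1 y2).
Proof. intros H; apply H. Qed.
Lemma cg_join {L : pmAlgebra} (th : L -> L -> Prop) : congruence L th ->
  forall x1 y1 x2 y2, th x1 y1 -> th x2 y2 -> th (join x1 x2) (join y1 y2).
Proof. intros H; apply H. Qed.
Lemma cg_pc {L : pmAlgebra} (th : L -> L -> Prop) : congruence L th -> forall x y, th x y -> th (pc x) (pc y).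
Proof. intros H; apply H. Qed.
Lemma cg_inv {L : pmAlgebra} (th : L -> L -> Prop) : congruence L th -> forall x y, th x y -> th (inv x) (inv y).
Proof. intros H; apply H. Qed.
Lemma cg_meetl {L : pmAlgebra} (th : L -> L -> Prop) : congruence L th ->
  forall z x y, th x y -> th (meet z x) (meet z y).
Proof. intros H z x y h; apply cg_meet; auto; apply cg_refl; auto. Qed.
Lemma cg_joinl {L : pmAlgebra} (th : L -> L -> Prop) : congruence L th ->
  forall z x y, th x y -> th (join z x) (join z y).
Proof. intros H z x y h; apply cg_join; auto; apply cg_refl; auto. Qed.
Lemma cg_eq {L : pmAlgebra} (th : L -> L -> Prop) : congruence L th -> forall x y, x = y -> th x y.
Proof. intros H x y ->; apply cg_refl; auto. Qed.

Lemma kernel_transfer {L : pmAlgebra} (th ph : L -> L -> Prop) (c : L) :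
  congruence L th -> congruence L ph -> (forall x, th c x <-> ph c x) ->
  forall s, th s bot -> ph s bot.
Proof.
  intros Ht Hp Hc s Hs.
  assert (h1 : ph c (join c s)).
  { apply Hc. apply (cg_sym _ Ht). rewrite <- (join_bot c) at 2. apply (cg_joinl _ Ht); auto. }
  assert (h2 : ph c (meet c (pc s))).
  { apply Hc. apply (cg_sym _ Ht). rewrite <- (meet_top c) at 2. rewrite <- pc_bot.
    apply (cg_meetl _ Ht). apply (cg_pc _ Ht); auto. }
  apply (cg_trans _ Hp) with (meet s c).
  - rewrite <- (meet_absorb s c) at 1. rewrite (joinC s c).
    apply (cg_meetl _ Hp). apply (cg_sym _ Hp); auto.
  - apply (cg_trans _ Hp) with (meet s (meet c (pc s))).
    + apply (cg_meetl _ Hp); auto.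
    + apply (cg_eq _ Hp). rewrite (meetC c), meetA, pc_meet, bot_meet. reflexivity.
Qed.

Lemma skel_transfer {L : pmAlgebra} (ph : L -> L -> Prop) (u v : L) :
  congruence L ph -> pc (pc v) = v -> ph (meet u (pc v)) bot -> ph u (meet u v).
Proof.
  intros Hp Hv Hz. set (z := meet u (pc v)) in *.
  assert (Hle : le L (meet u (pc z)) v).
  { rewrite <- Hv. apply pc_le. unfold z.
    rewrite meetA, (meetC (pc v) u). apply pc_meet. }
  assert (H1 : ph (pc z) top) by (rewrite <- pc_bot; apply (cg_pc _ Hp); auto).
  apply (cg_trans _ Hp) with (meet u (pc z)).
  - rewrite <- (meet_top u) at 1. apply (cg_meetl _ Hp), (cg_sym _ Hp); auto.
  - unfold le in Hle. rewrite <- Hle.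
    apply cg_meet; auto; [|apply cg_refl; auto].
    apply (cg_trans _ Hp) with (meet u top); [apply cg_meetl; auto|apply cg_eq; auto; apply meet_top].
Qed.

Lemma R_det {L : pmAlgebra} (ph : L -> L -> Prop) (x y : L) :
  RR L -> congruence L ph -> ph (pc x) (pc y) -> ph (plus x) (plus y) -> ph x (meet x y).
Proof.
  intros HR Hp H1 H2.
  set (w := meet x (plus x)).
  apply (cg_trans _ Hp) with (join (meet x y) w).
  - rewrite <- (meet_top x) at 1. rewrite <- (join_plus y).
    unfold w. rewrite <- meet_joinDr. apply (cg_meetl _ Hp), (cg_joinl _ Hp), (cg_sym _ Hp); auto.
  - apply (cg_trans _ Hp) with (join (meet x y) (meet w y)).
    + apply (cg_joinl _ Hp).
      assert (Hw : le L w (join y (pc y))) by apply HR.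
      unfold le in Hw.
      apply (cg_trans _ Hp) with (meet w (join y (pc y))); [apply cg_eq; auto|].
      apply (cg_trans _ Hp) with (meet w (join y (pc x))).
      * apply (cg_meetl _ Hp), (cg_joinl _ Hp), (cg_sym _ Hp); auto.
      * apply (cg_eq _ Hp). rewrite meet_joinDr.
        assert (E : meet w (pc x) = bot).
        { apply le_bot_eq. rewrite <- (pc_meet x). apply meet_mono; [apply le_meet_l|apply le_refl]. }
        rewrite E, join_bot. reflexivity.
    + apply (cg_eq _ Hp). rewrite joinC. apply (proj1 (le_join _ _)). apply meet_mono; [apply le_meet_l|apply le_refl].
Qed.

Lemma R_regular {L : pmAlgebra} : RR L -> regular L.
Proof.
  intros HR th ph Ht Hp [c Hc].
  assert (K : forall th ph : L -> L -> Prop, congruence L th -> congruence L ph ->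
     (forall s, th s bot -> ph s bot) -> forall x y, th x y -> ph x y).
  { clear th ph Ht Hp Hc. intros th ph Ht Hp Hk.
    assert (Sk : forall u v, th u v -> pc (pc v) = v -> pc (pc u) = u -> ph u v).
    { intros u v h hv hu.
      assert (a1 : ph u (meet u v)).
      { apply skel_transfer; auto. apply Hk. rewrite <- (pc_meet v).
        apply (cg_meet _ Ht); auto. apply cg_refl; auto. }
      assert (a2 : ph v (meet v u)).
      { apply skel_transfer; auto. apply Hk. rewrite <- (pc_meet u).
        apply (cg_meet _ Ht); auto. apply (cg_sym _ Ht); auto. apply cg_refl; auto. }
      rewrite meetC in a2. apply (cg_trans _ Hp) with (meet u v); auto. apply (cg_sym _ Hp); auto. }
    intros x y h.
    assert (b1 : ph (pc x) (pc y)) by (apply Sk; [apply (cg_pc _ Ht); auto| apply pc3 | apply pc3]).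
    assert (b2 : ph (plus x) (plus y)).
    { unfold plus. apply (cg_inv _ Hp). apply Sk; try apply pc3.
      apply (cg_pc _ Ht), (cg_inv _ Ht); auto. }
    assert (c1 : ph x (meet x y)) by (apply R_det; auto).
    assert (c2 : ph y (meet y x)) by (apply R_det; auto; apply (cg_sym _ Hp); auto).
    rewrite meetC in c2. apply (cg_trans _ Hp) with (meet x y); auto. apply (cg_sym _ Hp); auto. }
  intros x y; split.
  - apply K; auto. apply kernel_transfer with c; auto.
  - apply K; auto. apply kernel_transfer with c; auto. intro z; symmetry; apply Hc.
Qed.


Definition Phi {L : pmAlgebra} (x y : L) : Prop := pc x = pc y /\ pc (inv x) = pc (inv y).

Lemma Phi_cong {L : pmAlgebra} : congruence L Phi.
Proof.
  unfold congruence, Phi.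
  split; [intros; auto|].
  split; [intros x y [h1 h2]; auto|].
  split; [intros x y z [h1 h2] [h3 h4]; split; congruence|].
  split; [intros x1 y1 x2 y2 [h1 h2] [h3 h4]; split;
    [apply pc_meet_cong; auto | rewrite !inv_meet, !pc_join; congruence]|].
  split; [intros x1 y1 x2 y2 [h1 h2] [h3 h4]; split;
    [rewrite !pc_join; congruence | rewrite !inv_join; apply pc_meet_cong; auto]|].
  split; [intros x y [h1 h2]; rewrite h1; auto|].
  intros x y [h1 h2]. rewrite !invK. auto.
Qed.

Lemma eq_cong {L : pmAlgebra} : congruence L (fun x y => x = y).
Proof. repeat split; intros; subst; auto. Qed.

Lemma regular_R {L : pmAlgebra} : regular L -> RR L.
Proof.
  intros Hreg a b.
  assert (Hinj : forall x y : L, Phi x y -> x = y).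
  { intros x y. refine (proj1 (Hreg Phi (fun x y => x = y) Phi_cong eq_cong _ x y)).
    exists bot. intro z. unfold Phi. split.
    - intros [h1 h2]. rewrite pc_bot in h1.
      rewrite <- (meet_top z), h1, pc_meet. reflexivity.
    - intros <-. auto. }
  set (v := join b (pc b)). set (w := meet a (plus a)).
  assert (Hv : pc v = bot).
  { unfold v. rewrite pc_join. apply pc_meet. }
  assert (E : join v w = v).
  { apply Hinj. split.
    - rewrite pc_join, Hv, bot_meet. reflexivity.
    - rewrite inv_join. rewrite <- (meet_top (inv v)) at 2.
      apply pc_meet_cong; auto.
      unfold w, plus. rewrite inv_meet, invK, pc_join, pc_top. apply pc_meet. }
  rewrite joinC in E. apply le_join. exact E.
Qed.

Lemma prime_down {L : pmAlgebra} (I : L -> Prop) : prime_ideal L I -> forall x y, I y -> le L x y -> I x.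
Proof. intros H; apply H. Qed.
Lemma prime_join {L : pmAlgebra} (I : L -> Prop) : prime_ideal L I -> forall x y, I x -> I y -> I (join x y).
Proof. intros H; apply H. Qed.
Lemma prime_top {L : pmAlgebra} (I : L -> Prop) : prime_ideal L I -> ~ I top.
Proof. intros H; apply H. Qed.
Lemma prime_bot {L : pmAlgebra} (I : L -> Prop) : prime_ideal L I -> I bot.
Proof. intros H; apply H. Qed.
Lemma prime_prime {L : pmAlgebra} (I : L -> Prop) : prime_ideal L I -> forall x y, I (meet x y) -> I x \/ I y.
Proof. intros H; apply H. Qed.

Lemma R_no3 {L : pmAlgebra} (X Y Z : L -> Prop) : RR L ->
  prime_ideal L X -> prime_ideal L Y -> prime_ideal L Z ->
  incl L X Y -> incl L Y Z -> ~ same L X Y -> ~ same L Y Z -> False.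
Proof.
  intros HR PX PY PZ hXY hYZ nXY nYZ.
  assert (ha : exists a, Y a /\ ~ X a).
  { apply NNPP; intro hn. apply nXY. intro x; split; auto.
    intro hy. apply NNPP; intro hx. apply hn; eauto. }
  assert (hb : exists b, Z b /\ ~ Y b).
  { apply NNPP; intro hn. apply nYZ. intro x; split; auto.
    intro hy. apply NNPP; intro hx. apply hn; eauto. }
  destruct ha as [a [ya xa]]. destruct hb as [b [zb yb]].
  assert (pa : X (pc a)).
  { destruct (prime_prime _ PX a (pc a)) as [h|h]; auto. rewrite pc_meet. apply prime_bot; auto.
    contradiction. }
  assert (pb : ~ Z (plus b)).
  { intro h. apply (prime_top _ PZ). rewrite <- (join_plus b). apply prime_join; auto. }
  assert (Hm : Y (meet b (plus b))).
  { apply prime_down with (join a (pc a)); auto. apply prime_join; auto. }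
  destruct (prime_prime _ PY _ _ Hm) as [h|h]; [contradiction|apply pb; apply hYZ; exact h].
Qed.

Lemma same_sym {L : pmAlgebra} (I J : L -> Prop) : same L I J -> same L J I.
Proof. intros h x; split; apply h. Qed.

Lemma R_height {L : pmAlgebra} : RR L -> height_at_most_1 L.
Proof.
  intros HR C [Cp Ct] I J K CI CJ CK.
  apply NNPP; intro hn.
  assert (nIJ : ~ same L I J) by tauto.
  assert (nJK : ~ same L J K) by tauto.
  assert (nIK : ~ same L I K) by tauto.
  pose proof (Cp _ CI) as PI. pose proof (Cp _ CJ) as PJ. pose proof (Cp _ CK) as PK.
  assert (S := @same_sym L).
  destruct (Ct _ _ CI CJ) as [h1|h1]; destruct (Ct _ _ CJ CK) as [h2|h2].
  - eapply (R_no3 I J K); eauto.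
  - destruct (Ct _ _ CI CK) as [h3|h3].
    + eapply (R_no3 I K J); eauto.
    + eapply (R_no3 K I J); eauto.
  - destruct (Ct _ _ CI CK) as [h3|h3].
    + eapply (R_no3 J I K); eauto.
    + eapply (R_no3 J K I); eauto.
  - eapply (R_no3 K J I); eauto.
Qed.


Lemma zorn_sets (T : Type) (P : (T->Prop) -> Prop) :
  (forall F : (T->Prop)->Prop, (forall X, F X -> P X) ->
     (forall X Y, F X -> F Y -> (forall x, X x -> Y x) \/ (forall x, Y x -> X x)) ->
     P (fun a => exists X, F X /\ X a)) ->
  exists A, P A /\ forall B, (forall x, A x -> B x) -> ~ (forall x, B x -> A x) -> ~ P B.
Proof.
  intros H.
  destruct (@classical_sets.Zorn_bigcup T P) as [A [PA HA]].
  - intros F HF Htot.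
    assert (E : classical_sets.bigcup F (fun X => X) = (fun a => exists X, F X /\ X a)).
    { apply functional_extensionality; intro a. apply propositional_extensionality.
      unfold classical_sets.bigcup. simpl. split.
      + intros [X h1 h2]; eauto.
      + intros [X [h1 h2]]; econstructor; eauto. }
    rewrite E. apply H. exact HF. exact Htot.
  - exists A; split; auto. intros B h1 h2 PB. apply (HA B); auto. split; auto.
Qed.

Definition good {L : pmAlgebra} (J F X : L -> Prop) : Prop :=
  X bot /\ (forall x y, X y -> le L x y -> X x) /\ (forall x y, X x -> X y -> X (join x y)) /\
  (forall x, J x -> X x) /\ (forall x, X x -> F x -> False).

Lemma PIT {L : pmAlgebra} (J F : L -> Prop) :
  J bot -> (forall x y, J y -> le L x y -> J x) -> (forall x y, J x -> J y -> J (join x y)) ->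
  F top -> (forall x y, F x -> le L x y -> F y) -> (forall x y, F x -> F y -> F (meet x y)) ->
  (forall x, J x -> F x -> False) ->
  exists I, prime_ideal L I /\ (forall x, J x -> I x) /\ (forall x, I x -> F x -> False).
Proof.
  intros J0 Jd Jj F1 Fu Fm JF.
  destruct (zorn_sets L (fun X => (forall a, ~ X a) \/ good J F X)) as [A [PA HA]].
  - intros Fam HF Ht.
    destruct (classic (exists X, Fam X /\ good J F X)) as [[X0 [FX0 G0]]|hn].
    + right. destruct G0 as (g1 & g2 & g3 & g4 & g5).
      assert (memgood : forall X a, Fam X -> X a -> good J F X).
      { intros X a FX Xa. destruct (HF X FX) as [h|h]; auto. exfalso; eapply h; eauto. }
      split; [exists X0; auto|].
      split; [intros x y [X [FX Xy]] hle; exists X; split; auto;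
              destruct (memgood X y FX Xy) as (_ & h & _); eauto|].
      split.
      { intros x y [X [FX Xx]] [Y [FY Yy]].
        destruct (Ht X Y FX FY) as [h|h].
        - exists Y; split; auto. destruct (memgood Y y FY Yy) as (_ & _ & h3 & _); auto.
        - exists X; split; auto. destruct (memgood X x FX Xx) as (_ & _ & h3 & _); auto. }
      split; [intros x Jx; exists X0; auto|].
      intros x [X [FX Xx]] Fx. destruct (memgood X x FX Xx) as (_ & _ & _ & _ & h5); eauto.
    + left. intros a [X [FX Xa]]. destruct (HF X FX) as [h|h]; [eapply h; eauto|].
      apply hn; eauto.
  - assert (GA : good J F A).
    { destruct PA as [h|h]; auto. exfalso.
      apply (HA J); [intros x Ax; exfalso; eapply h; eauto| |].
      + intro hJ. apply (h bot). apply hJ; auto.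
      + right. repeat split; auto. }
    destruct GA as (g1 & g2 & g3 & g4 & g5).
    exists A. split; [|split; auto].
    split; [auto|]. split; [auto|]. split; [auto|]. split; [intro h; eauto|].
    intros x y Hxy. apply NNPP; intro hn.
    assert (nx : ~ A x) by tauto. assert (ny : ~ A y) by tauto.
    assert (ext : forall c, ~ A c -> exists f i, F f /\ A i /\ le L f (join i c)).
    { intros c nc. apply NNPP; intro hne.
      set (B := fun z => exists i, A i /\ le L z (join i c)).
      apply (HA B).
      - intros z Az. exists z. split; auto. apply le_join_l.
      - intro hB. apply nc. apply hB. exists bot. split; auto. rewrite bot_join. apply le_refl.
      - right. unfold B. split; [exists bot; split; auto; apply le_bot|].
        split; [intros u v [i [Ai hi]] hle; exists i; split; auto; eapply le_trans; eauto|].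
        split; [intros u v [i [Ai hi]] [j [Aj hj]]; exists (join i j); split; auto;
                apply join_lub; (eapply le_trans; [eassumption|]); apply join_mono;
                auto using le_join_l, le_join_r, le_refl|].
        split; [intros u Ju; exists u; split; auto; apply le_join_l|].
        intros u [i [Ai hi]] Fuu. apply hne. exists u, i. auto. }
    destruct (ext x nx) as [f1 [i1 [F1' [A1 h1]]]].
    destruct (ext y ny) as [f2 [i2 [F2' [A2 h2]]]].
    apply (g5 (meet f1 f2)); auto.
    apply g2 with (join (join i1 i2) (meet x y)); auto.
    rewrite join_meetDr. apply meet_mono.
    + apply le_trans with (join i1 x); auto. apply join_mono; [apply le_join_l|apply le_refl].
    + apply le_trans with (join i2 y); auto. apply join_mono; [apply le_join_r|apply le_refl].
Qed.


Lemma height_R {L : pmAlgebra} : height_at_most_1 L -> RR L.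
Proof.
  intros Hh a b. apply NNPP; intro hn.
  set (v := join b (pc b)) in *. set (w := meet a (plus a)) in *.
  destruct (PIT (fun z => le L z v) (fun z => le L w z)) as [P [PP [PJ PF]]].
  - apply le_bot.
  - intros x y h1 h2. eapply le_trans; eauto.
  - intros x y h1 h2. apply join_lub; auto.
  - apply le_top.
  - intros x y h1 h2. eapply le_trans; eauto.
  - intros x y h1 h2. apply meet_glb; auto.
  - intros x h1 h2. apply hn. eapply le_trans; eauto.
  - assert (Pv : P v) by (apply PJ; apply le_refl).
    assert (Pb : P b) by (apply (prime_down _ PP) with v; auto; apply le_join_l).
    assert (Ppb : P (pc b)) by (apply (prime_down _ PP) with v; auto; apply le_join_r).
    assert (na : ~ P a) by (intro h; apply (PF w); [apply (prime_down _ PP) with a; auto; apply le_meet_l|apply le_refl]).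
    assert (npa : ~ P (plus a)) by (intro h; apply (PF w); [apply (prime_down _ PP) with (plus a); auto; apply le_meet_r|apply le_refl]).
    destruct (PIT (fun z => le L z bot) (fun z => exists p, ~ P p /\ le L (meet b p) z))
      as [Q [PQ [QJ QF]]].
    + apply le_refl.
    + intros x y h1 h2. eapply le_trans; eauto.
    + intros x y h1 h2. apply join_lub; auto.
    + exists top. split; [apply (prime_top _ PP)|apply le_top].
    + intros x y [p [hp h1]] h2. exists p. split; auto. eapply le_trans; eauto.
    + intros x y [p [hp h1]] [q [hq h2]]. exists (meet p q). split.
      * intro h. destruct (prime_prime _ PP _ _ h); auto.
      * apply meet_glb.
        -- eapply le_trans; [|apply h1]. apply meet_mono; [apply le_refl|apply le_meet_l].
        -- eapply le_trans; [|apply h2]. apply meet_mono; [apply le_refl|apply le_meet_r].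
    + intros x h1 [p [hp h2]]. apply hp.
      apply (prime_down _ PP) with (pc b); auto. apply pc_le.
      apply le_bot_eq. eapply le_trans; eauto.
    + destruct (PIT (fun z => exists p, P p /\ le L z (join p a)) (fun z => z = top))
        as [K [PK [KJ KF]]].
      * exists bot. split; [apply (prime_bot _ PP)|apply le_bot].
      * intros x y [p [hp h]] h2. exists p; split; auto. eapply le_trans; eauto.
      * intros x y [p [hp h1]] [q [hq h2]]. exists (join p q). split.
        -- apply (prime_join _ PP); auto.
        -- apply join_lub.
           ++ eapply le_trans; [apply h1|]. apply join_mono; [apply le_join_l|apply le_refl].
           ++ eapply le_trans; [apply h2|]. apply join_mono; [apply le_join_r|apply le_refl].
      * reflexivity.
      * intros x y h1 h2. subst x. apply le_top_eq; auto.
      * intros x y -> ->. apply meet_top.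
      * intros x h1 h2. subst x. destruct h1 as [p [hp h]].
        apply npa. apply (prime_down _ PP) with p; auto. apply plus_le.
        rewrite joinC. apply le_top_eq; auto.
      * assert (QP : incl L Q P).
        { intros x Qx. apply NNPP; intro nPx. apply (QF (meet b x)).
          - apply (prime_down _ PQ) with x; auto. apply le_meet_r.
          - exists x. split; auto. apply le_refl. }
        assert (PK' : incl L P K).
        { intros x Px. apply KJ. exists x. split; auto. apply le_join_l. }
        assert (Qb : ~ Q b).
        { intro h. apply (QF b); auto. exists top. split; [apply (prime_top _ PP)|].
          rewrite meet_top. apply le_refl. }
        assert (Ka : K a) by (apply KJ; exists bot; split; [apply (prime_bot _ PP)|rewrite bot_join; apply le_refl]).
        set (C := fun X : L -> Prop => X = Q \/ X = P \/ X = K).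
        assert (Cc : pchain L C).
        { split.
          - intros X [->|[->| ->]]; auto.
          - intros X Y [->|[->| ->]] [->|[->| ->]];
              try (left; intros u hu; auto; fail); try (right; intros u hu; auto; fail). }
        destruct (Hh C Cc Q P K) as [h|[h|h]]; unfold C; auto.
        -- apply Qb. apply h. auto.
        -- apply na. apply h. auto.
        -- apply Qb. apply h. auto.
Qed.

Theorem theorem3p1 (L : pmAlgebra) : regular L <-> height_at_most_1 L.
Proof.
  split.
  - intro h. apply R_height. apply regular_R. exact h.
  - intro h. apply R_regular. apply height_R. exact h.
Qed.
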